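(* Let $a_{\inf},a_{\sup},b_{\inf},b_{\sup},\chi,\mu$ be positive constants with $a_{\inf}\le a_{\sup}$, $b_{\inf}\le b_{\sup}$, and suppose $b_{\inf}>\big(1+\frac{a_{\sup}}{a_{\inf}}\big)\chi\mu$. Define sequences by $\underline{M}_0=0$ and, for $n\ge0$, $$\overline{M}_n=\frac{a_{\sup}-\chi\mu\underline{M}_n}{b_{\inf}-\chi\mu},\qquad \underline{M}_{n+1}=\frac{a_{\inf}-\chi\mu\overline{M}_n}{b_{\sup}-\chi\mu}.$$ Then for every $n\ge0$, $\underline{M}_{n+1}>\underline{M}_n\ge0$ and $\overline{M}_n>\overline{M}_{n+1}>0$, and $\lim_{n\to\infty}(\underline{M}_n,\overline{M}_n)=(\underline{M},\overline{M})$, where $$\underline{M}:=\frac{(b_{\inf}-\chi\mu)a_{\inf}-\chi\mu a_{\sup}}{(b_{\sup}-\chi\mu)(b_{\inf}-\chi\mu)-(\chi\mu)^2},\qquad \overline{M}:=\frac{(b_{\sup}-\chi\mu)a_{\sup}-\chi\mu a_{\inf}}{(b_{\sup}-\chi\mu)(b_{\inf}-\chi\mu)-(\chi\mu)^2}.$$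
   Context: In the paper, $a_{\inf},a_{\sup}$ (resp. $b_{\inf},b_{\sup}$) are the infimum and supremum over $(x,t)\in\mathbb{R}^N\times\mathbb{R}$ of positive bounded functions $a(x,t)$ (resp. $b(x,t)$). *)

(* Defs.v *)
From Stdlib Require Import Reals.
Open Scope R_scope.

Fixpoint Mlow (ainf asup binf bsup chi mu : R) (n : nat) : R :=
  match n with
  | O => 0
  | S k => (ainf - chi * mu *
             ((asup - chi * mu * Mlow ainf asup binf bsup chi mu k) / (binf - chi * mu)))
           / (bsup - chi * mu)
  end.

Definition Mup (ainf asup binf bsup chi mu : R) (n : nat) : R :=
  (asup - chi * mu * Mlow ainf asup binf bsup chi mu n) / (binf - chi * mu).

(* Main.v *)
Require Import Defs.
From Stdlib Require Import Reals Lra.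
Open Scope R_scope.

Lemma geo_cv (u : nat -> R) (A D k : R) :
  0 <= k < 1 -> (forall n, u n = A - D * k ^ n) -> Un_cv u A.
Proof.
  intros Hk Hu eps Heps.
  assert (Hd : 0 < Rabs D + 1) by (pose proof (Rabs_pos D); lra).
  destruct (pow_lt_1_zero k ltac:(rewrite Rabs_pos_eq; lra) (eps / (Rabs D + 1)))
    as [N HN].
  { apply Rdiv_lt_0_compat; lra. }
  exists N. intros n Hn. unfold R_dist. rewrite Hu.
  replace (A - D * k ^ n - A) with (- (D * k ^ n)) by ring.
  rewrite Rabs_Ropp, Rabs_mult.
  specialize (HN n Hn).
  assert (Hp : 0 <= Rabs (k ^ n)) by apply Rabs_pos.
  apply Rle_lt_trans with ((Rabs D + 1) * Rabs (k ^ n)).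
  { apply Rmult_le_compat_r; lra. }
  apply Rmult_lt_compat_l with (r := Rabs D + 1) in HN; [|lra].
  replace ((Rabs D + 1) * (eps / (Rabs D + 1))) with eps in HN by (field; lra).
  exact HN.
Qed.

Theorem lemma3p4 (ainf asup binf bsup chi mu : R) :
  0 < ainf -> 0 < asup -> 0 < binf -> 0 < bsup -> 0 < chi -> 0 < mu ->
  ainf <= asup -> binf <= bsup ->
  binf > (1 + asup / ainf) * chi * mu ->
  (forall n : nat,
     Mlow ainf asup binf bsup chi mu (S n) > Mlow ainf asup binf bsup chi mu n /\
     Mlow ainf asup binf bsup chi mu n >= 0 /\
     Mup ainf asup binf bsup chi mu n > Mup ainf asup binf bsup chi mu (S n) /\
     Mup ainf asup binf bsup chi mu (S n) > 0) /\
  Un_cv (Mlow ainf asup binf bsup chi mu)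
    (((binf - chi * mu) * ainf - chi * mu * asup) /
     ((bsup - chi * mu) * (binf - chi * mu) - (chi * mu) ^ 2)) /\
  Un_cv (Mup ainf asup binf bsup chi mu)
    (((bsup - chi * mu) * asup - chi * mu * ainf) /
     ((bsup - chi * mu) * (binf - chi * mu) - (chi * mu) ^ 2)).
Proof.
  intros ha1 ha2 hb1 hb2 hchi hmu hA hB H.
  set (c := chi * mu) in *.
  assert (hc : 0 < c) by (unfold c; nra).
  assert (H' : binf * ainf > (ainf + asup) * c).
  { unfold Rdiv in H. 
    replace ((1 + asup * / ainf) * chi * mu) with ((ainf + asup) * c / ainf) in H
      by (unfold c; field; lra).
    apply Rmult_gt_compat_r with (r := ainf) in H; [|lra].
    replace ((ainf + asup) * c / ainf * ainf) with ((ainf + asup) * c) in H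
      by (field; lra). lra. }
  set (B1 := binf - c). set (B2 := bsup - c).
  assert (hB1 : B1 * ainf > c * asup) by (unfold B1; nra).
  assert (hB1c : B1 > c) by (unfold B1; nra).
  assert (hB2 : B2 >= B1) by (unfold B1, B2; lra).
  set (k := c ^ 2 / (B1 * B2)).
  assert (hk : 0 <= k < 1).
  { unfold k. split.
    - apply Rlt_le, Rdiv_lt_0_compat; nra.
    - apply (Rmult_lt_reg_r (B1 * B2)); [nra|].
      unfold Rdiv. rewrite Rmult_assoc, Rinv_l by nra. nra. }
  set (Ls := (B1 * ainf - c * asup) / (B2 * B1 - c ^ 2)).
  assert (hden : B2 * B1 - c ^ 2 > 0) by nra.
  assert (hLs : Ls > 0) by (unfold Ls; apply Rdiv_lt_0_compat; lra).
  set (L := Mlow ainf asup binf bsup chi mu).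
  assert (closed : forall n, L n = Ls - Ls * k ^ n).
  { induction n as [|n IH].
    - simpl. unfold L; simpl. ring.
    - unfold L; simpl Mlow. fold L. rewrite IH. fold c. fold B1 B2.
      unfold Ls, k. simpl pow. field. split; nra. }
  assert (hMup : forall n, Mup ainf asup binf bsup chi mu n = (asup - c * L n) / B1).
  { intro n. unfold Mup. reflexivity. }
  assert (hkn : forall n, 0 <= k ^ n) by (intro; apply pow_le; lra).
  assert (hkpos : 0 < k).
  { unfold k. apply Rdiv_lt_0_compat; nra. }
  assert (hknp : forall n, 0 < k ^ n) by (intro; apply pow_lt; lra).
  assert (hAs : asup - c * Ls > 0).
  { unfold Ls. 
    assert (asup * B2 > c * ainf) by nra.
    assert (asup * (B2 * B1 - c^2) - c * (B1 * ainf - c * asup) > 0).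
    { replace (asup * (B2 * B1 - c^2) - c * (B1 * ainf - c * asup)) with
        (B1 * (asup * B2 - c * ainf)) by ring.
      apply Rmult_lt_0_compat; lra. }
    replace (asup - c * ((B1 * ainf - c * asup) / (B2 * B1 - c ^ 2))) with
      ((asup * (B2 * B1 - c^2) - c * (B1 * ainf - c * asup)) / (B2 * B1 - c ^ 2))
      by (field; lra).
    apply Rdiv_lt_0_compat; lra. }
  split; [|split].
  - intro n. rewrite !hMup, !closed. simpl pow.
    assert (h0 : 0 < k ^ n) by auto.
    assert (h1 : k ^ n <= 1).
    { clear -hk hkn. induction n; simpl; [lra|]. pose proof (hkn n). nra. }
    assert (h2 : 0 < Ls * k ^ n) by (apply Rmult_lt_0_compat; lra).
    assert (h3 : 0 < Ls * k ^ n * (1 - k)) by (apply Rmult_lt_0_compat; lra).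
    assert (h4 : Ls * k ^ n <= Ls) by nra.
    assert (h5 : Ls * (k * k ^ n) < Ls * k ^ n) by nra.
    split; [nra|]. split; [nra|]. split.
    + apply Rmult_lt_compat_r; [apply Rinv_0_lt_compat; lra|]. nra.
    + apply Rdiv_lt_0_compat; [|lra].
      assert (0 < c * (Ls * (k * k ^ n))) by (apply Rmult_lt_0_compat; nra). nra.
  - apply (geo_cv L Ls Ls k hk). intro n. rewrite closed.
    reflexivity.
  - apply (geo_cv _ _ (- c * Ls / B1) k hk). intro n. rewrite hMup, closed.
    fold c B1 B2. unfold Ls. field. lra.
Qed.
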